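(* Let $F$ be a field and let $G$ be a bipartite graph with bipartition $(X,Y)$, where $|X|=m$, $|Y|=n$ and $m\le n$. Suppose $\mathcal{R}_F(G)\neq\emptyset$, and let $H$ be the subgraph obtained from $G$ by deleting $k$ vertices of $X$. Then $$f(H\Box K_2)=m-k.$$
   Context: All graphs are finite and simple. For a graph $H$ with a perfect matching $M$, a subset $S\subseteq M$ is a forcing set of $M$ if $S$ is contained in no other perfect matching of $H$; $f(H,M)$ is the minimum size of a forcing set of $M$, and $f(H)$ is the minimum of $f(H,M)$ over all perfect matchings $M$ of $H$. For a bipartite graph $G$ with bipartition $(X,Y)$, a weighted bi-adjacency matrix of $G$ over $F$ is an $|X|\times|Y|$ matrix over $F$, rows indexed by $X$ and columns by $Y$, whose $(x,y)$ entry is nonzero iff $x$ and $y$ are adjacent. $\mathcal{R}_F(G)$ denotes the set of weighted bi-adjacency matrices $B$ of $G$ over $F$ for which there is another weighted bi-adjacency matrix $C$ of $G$ over $F$ (same row/column indexing) with $BC^{\top}=I_{|X|}$. $K_2$ is the complete graph on two vertices, and $G\Box H$ is the Cartesian product: vertex set $V(G)\times V(H)$, with $(g_1,h_1)\sim(g_2,h_2)$ iff either $g_1=g_2$ and $h_1h_2\in E(H)$, or $h_1=h_2$ and $g_1g_2\in E(G)$. *)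

(* Defs.v *)
From mathcomp Require Import all_boot all_order all_algebra.
Set Implicit Arguments. Unset Strict Implicit. Unset Printing Implicit Defensive.
Import GRing.Theory.
Local Open Scope ring_scope.

(* A (simple) graph is given by an adjacency relation e : rel T on a finType T.
   An edge is represented as the 2-element vertex set {u, v} with e u v. *)
Section Matchings.
Variable T : finType.
Variable e : rel T.

Definition edge_set (M : {set {set T}}) : bool :=
  [forall E in M, [exists u, [exists v, e u v && (E == [set u; v])]]].

Definition perfect_matching (M : {set {set T}}) : bool :=
  edge_set M && [forall v, #|[set E in M | v \in E]| == 1%N].

Definition forcing_set (M S : {set {set T}}) : bool :=
  (S \subset M) &&
  [forall M' : {set {set T}}, (perfect_matching M' && (S \subset M')) ==> (M' == M)].

(* f(H, M): minimum size of a forcing set of M (M itself is always forcing) *)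
Definition forcing_num (M : {set {set T}}) : nat :=
  \big[minn/#|M|]_(S : {set {set T}} | forcing_set M S) #|S|.

Definition min_forcing_num : nat :=
  \big[minn/#|T|]_(M : {set {set T}} | perfect_matching M) forcing_num M.
End Matchings.

Definition cart_prod (T1 T2 : finType) (e1 : rel T1) (e2 : rel T2) : rel (T1 * T2) :=
  fun p q => ((p.1 == q.1) && e2 p.2 q.2) || ((p.2 == q.2) && e1 p.1 q.1).

Definition K2 : rel bool := fun a b => a != b.

Definition induced (T : finType) (e : rel T) (A : {set T}) : rel {v : T | v \in A} :=
  fun u v => e (val u) (val v).

Definition bip_graph (m n : nat) (adj : 'I_m -> 'I_n -> bool) : rel ('I_m + 'I_n) :=
  fun u v => match u, v with
             | inl x, inr y => adj x y
             | inr y, inl x => adj x y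
             | _, _ => false
             end.

Definition weighted_biadj (F : fieldType) (m n : nat) (adj : 'I_m -> 'I_n -> bool)
  (B : 'M[F]_(m, n)) : Prop :=
  forall i j, (B i j != 0) = adj i j.

Definition R_F (F : fieldType) (m n : nat) (adj : 'I_m -> 'I_n -> bool) : 'M[F]_(m, n) -> Prop :=
  fun B => weighted_biadj adj B /\
    exists C : 'M[F]_(m, n), weighted_biadj adj C /\ B *m C^T = 1%:M.

Definition delete_X (m n : nat) (adj : 'I_m -> 'I_n -> bool) (S : {set 'I_m}) :=
  @induced ('I_m + 'I_n)%type (bip_graph adj) (~: [set (inl x : 'I_m + 'I_n) | x in S]).
Arguments delete_X {m n} adj S.
Arguments induced {T} e A.

(* Main.v *)
Require Import Defs.
From mathcomp Require Import all_boot all_order all_algebra.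
From mathcomp Require Import fingroup perm zify.
Set Implicit Arguments. Unset Strict Implicit. Unset Printing Implicit Defensive.
Import GRing.Theory.

Lemma my_bigmin_le (I : finType) (P : pred I) (F : I -> nat) x j :
  P j -> \big[minn/x]_(i | P i) F i <= F j.
Proof.
have := mem_index_enum j; rewrite unlock; elim: (index_enum I) => //= i l ih.
rewrite inE => /orP [/eqP-> ->|/ih leminlfi Pi]; first by rewrite geq_minl.
by case: ifPn => Pj; [rewrite geq_min leminlfi// orbC|exact: leminlfi].
Qed.

Lemma my_bigmin_ge (I : finType) (P : pred I) (F : I -> nat) x c :
  c <= x -> (forall i, P i -> c <= F i) -> c <= \big[minn/x]_(i | P i) F i.
Proof.
move=> hx hF; apply: (big_ind (fun y => c <= y)) => //.
by move=> a b ha hb; rewrite leq_min ha hb.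
Qed.

Lemma set2_eq (T : finType) (v p a b : T) :
  [set v; p] = [set a; b] -> a != b -> (v == a) && (p == b) || (v == b) && (p == a).
Proof.
move=> E ab.
have ha : a \in [set v; p] by rewrite E set21.
have hb : b \in [set v; p] by rewrite E set22.
move: ha hb; rewrite !inE => /orP[]/eqP ea /orP[]/eqP eb; subst.
- by rewrite eqxx in ab.
- by rewrite !eqxx.
- by rewrite !eqxx orbT.
- by rewrite eqxx in ab.
Qed.

Section Gen.
Variables (T : finType) (e : rel T) (P : pred T).
Hypothesis esymm : symmetric e.
Hypothesis ecross : forall u v, e u v -> P u != P v.

Lemma eirr v : ~~ e v v.
Proof. by apply/negP => /ecross; rewrite eqxx. Qed.

Definition pmate (M : {set {set T}}) v := odflt v [pick w | [set v; w] \in M].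

Variable M : {set {set T}}.
Hypothesis pmM : perfect_matching e M.

Lemma edge2 E : E \in M -> exists u v, [/\ e u v, u != v & E = [set u; v]].
Proof.
case/andP: pmM => /forallP /(_ E) /implyP h _ /h /existsP [u /existsP [v /andP [huv /eqP ->]]].
exists u, v; split => //; apply/negP => /eqP eq; subst; by rewrite (negbTE (eirr _)) in huv.
Qed.

Lemma coverE v : exists2 E, E \in M & v \in E.
Proof.
case/andP: pmM => _ /forallP /(_ v) /cards1P [E hE].
have : E \in [set E in M | v \in E] by rewrite hE set11.
by rewrite inE => /andP [h1 h2]; exists E.
Qed.

Lemma uniqE v E1 E2 : E1 \in M -> E2 \in M -> v \in E1 -> v \in E2 -> E1 = E2.
Proof.
case/andP: pmM => _ /forallP /(_ v) /cards1P [E hE] h1 h2 h3 h4.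
have : E1 \in [set E in M | v \in E] by rewrite inE h1 h3.
have : E2 \in [set E in M | v \in E] by rewrite inE h2 h4.
by rewrite hE !inE => /eqP -> /eqP ->.
Qed.

Lemma pmateP v : [set v; pmate M v] \in M.
Proof.
rewrite /pmate; case: pickP => [w // | h] /=.
case: (coverE v) => E EM vE; case: (edge2 EM) => a [b [_ _ Eab]].
move: vE; rewrite Eab !inE => /orP [] /eqP vab; subst.
- by move: (h b); rewrite EM.
- by move: (h a); rewrite setUC EM.
Qed.

Lemma edge_neq v u : [set v; u] \in M -> u != v.
Proof.
move=> /edge2 [a [b [_ ab E]]].
case/orP: (set2_eq E ab) => /andP [/eqP -> /eqP ->] //; by rewrite eq_sym.
Qed.

Lemma pmate_uniq v u : [set v; u] \in M -> u = pmate M v.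
Proof.
move=> h; have h' := pmateP v.
have := uniqE h h' (set21 _ _) (set21 _ _) => E.
have : u \in [set v; pmate M v] by rewrite -E set22.
rewrite !inE => /orP [/eqP uv|/eqP //].
by move: (edge_neq h); rewrite uv eqxx.
Qed.

Lemma pmate_edge v : e v (pmate M v).
Proof.
have := pmateP v; move=> /edge2 [a [b [hab ab E]]].
case/orP: (set2_eq E ab) => /andP [/eqP -> /eqP ->] //; by rewrite esymm.
Qed.

Lemma pmateK : involutive (pmate M).
Proof.
move=> v; symmetry; apply: pmate_uniq; by rewrite setUC pmateP.
Qed.

Lemma pmate_cross v : P (pmate M v) = ~~ P v.
Proof.
have := ecross (pmate_edge v); by case: (P v); case: (P (pmate M v)).
Qed.

End Gen.

Definition pm_of (T : finType) (f : T -> T) := [set [set v; f v] | v : T].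

Lemma pm_ofP (T : finType) (e : rel T) (f : T -> T) :
  involutive f -> (forall v, e v (f v)) -> perfect_matching e (pm_of f).
Proof.
move=> fK fe; apply/andP; split.
  apply/forallP => E; apply/implyP => /imsetP [v _ ->].
  by apply/existsP; exists v; apply/existsP; exists (f v); rewrite fe eqxx.
apply/forallP => v; apply/cards1P; exists [set v; f v].
apply/setP => E; rewrite !inE; apply/idP/idP.
  case/andP => /imsetP [u _ ->]; rewrite !inE => /orP [] /eqP ->.
    by [].
  by rewrite fK setUC.
by move/eqP ->; rewrite set21 andbT; apply: imset_f.
Qed.

Section Gen2.
Variables (T : finType) (e : rel T) (P : pred T).
Hypothesis esymm : symmetric e.
Hypothesis ecross : forall u v, e u v -> P u != P v.

Lemma pmate_pm_of f : involutive f -> (forall v, e v (f v)) ->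
  forall v, pmate (pm_of f) v = f v.
Proof.
move=> fK fe v; symmetry; apply: (pmate_uniq ecross (pm_ofP fK fe)).
by apply: imset_f.
Qed.

Lemma pm_eq M : perfect_matching e M -> M = pm_of (pmate M).
Proof.
move=> pm; apply/setP => E; apply/idP/idP.
  move=> EM; case: (edge2 ecross pm EM) => a [b [_ _ Eab]].
  move: EM; rewrite Eab => EM.
  by rewrite (pmate_uniq ecross pm EM); apply: imset_f.
by case/imsetP => v _ ->; exact: (pmateP ecross pm).
Qed.
End Gen2.

Local Open Scope ring_scope.

Section Core.
Variables (F : fieldType) (T : finType) (e : rel T) (P : pred T).
Hypothesis esymm : symmetric e.
Hypothesis ecross : forall u v, e u v -> P u != P v.
Variables (M S : {set {set T}}).
Hypothesis pmM : perfect_matching e M.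
Hypothesis fS : forcing_set e M S.
Variable w : T -> T -> F.
Hypothesis hw : forall u v, P u -> (w u v != 0) = e u v.

Definition PR := [set v | P v & [set v; pmate M v] \notin S].

Lemma core_det :
  \det (\matrix_(i, j) w (enum_val i) (pmate M (enum_val j)) : 'M[F]_#|PR|) != 0.
Proof.
set N := #|PR|.
pose ep (i : 'I_N) : T := enum_val i.
have epP i : ep i \in PR := enum_valP i.
have epPP i : P (ep i) by move: (epP i); rewrite inE => /andP [].
have pmK := pmateK ecross pmM.
have pmate_out v : P v -> pmate M v \notin PR.
  by move=> Pv; rewrite inE (pmate_cross esymm ecross pmM) Pv.
have claim : forall s : 'S_N, (forall i, w (ep i) (pmate M (ep (s i))) != 0) -> s = 1%g.
  move=> s hs.
  pose phi (t : 'S_N) v := if [pick i | ep i == v] is Some i then ep (t i) else v.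
  have phi_ep t i : phi t (ep i) = ep (t i).
    rewrite /phi; case: pickP => [j /eqP /enum_val_inj -> // | h].
    by move: (h i); rewrite eqxx.
  have phi_out t v : v \notin PR -> phi t v = v.
    move=> vP; rewrite /phi; case: pickP => [j /eqP hj | //].
    by move: vP; rewrite -hj epP.
  have phi_in t v : v \in PR -> phi t v \in PR.
    move=> vP; rewrite /phi; case: pickP => [j _ | //]; exact: epP.
  have epr v (vP : v \in PR) : ep (enum_rank_in vP v) = v.
    exact: (enum_rankK_in vP vP).
  have phiK v : phi s^-1%g (phi s v) = v.
    case: (boolP (v \in PR)) => vP; last by rewrite !phi_out.
    by rewrite -(epr v vP) !phi_ep permK.
  pose pi v := phi s^-1%g (pmate M (phi s v)).
  have piK : involutive pi.
    move=> v; rewrite /pi.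
    case: (boolP (pmate M (phi s v) \in PR)) => h.
      rewrite -(epr _ h) phi_ep.
      have -> : phi s (ep (s^-1%g (enum_rank_in h (pmate M (phi s v))))) = 
                 pmate M (phi s v).
        by rewrite phi_ep permKV epr.
      by rewrite pmK phiK.
    by rewrite !(phi_out _ _ h) pmK phiK.
  have e_in v : v \in PR -> e v (pi v).
    move=> vP; rewrite -(epr v vP) /pi phi_ep phi_out; last exact: pmate_out.
    by rewrite -hw.
  have e_all v : e v (pi v).
    case: (boolP (v \in PR)) => vP; first exact: e_in.
    case: (boolP (pmate M v \in PR)) => h.
      have : pi v \in PR by rewrite /pi (phi_out s v vP) phi_in.
      by move=> /e_in; rewrite piK esymm.
    by rewrite /pi !phi_out //; exact: (pmate_edge esymm ecross pmM).
  have pmpi := pm_ofP piK e_all.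
  case/andP: fS => SM /forallP fS'.
  have SMpi : S \subset pm_of pi.
    apply/subsetP => E ES.
    have := subsetP SM _ ES; rewrite (pm_eq ecross pmM) => /imsetP [a _ Ea].
    have aP : a \notin PR by rewrite inE -Ea ES andbF.
    have maP : pmate M a \notin PR by rewrite inE pmK setUC -Ea ES andbF.
    have -> : E = [set a; pi a] by rewrite Ea /pi (phi_out _ _ aP) (phi_out _ _ maP).
    by apply: imset_f.
  have eqM : pm_of pi = M by apply/eqP; move: (fS' (pm_of pi)); rewrite pmpi SMpi.
  have hpi v : pi v = pmate M v by rewrite -(pmate_pm_of ecross piK e_all) eqM.
  apply/permP => i; rewrite perm1.
  have := hpi (ep i); rewrite /pi phi_ep phi_out; last exact: pmate_out.
  by move/(can_inj pmK)/enum_val_inj.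
rewrite /determinant (bigD1 1%g) //= [X in _ + X]big1 ?addr0.
  rewrite odd_perm1 expr0 mul1r; apply/prodf_neq0 => i _.
  rewrite mxE perm1 hw //; exact: (pmate_edge esymm ecross pmM).
move=> s s1; apply/eqP; rewrite mulf_eq0; apply/orP; right.
apply/prodf_eq0.
case: (pickP (fun i => (\matrix_(i, j) w (enum_val i) (pmate M (enum_val j)) : 'M[F]_N) i (s i) == 0)) => [i hi | h]; first by exists i.
have : s = 1%g.
  apply: claim => i; move: (h i); rewrite mxE => /negbT //.
by move/eqP; rewrite (negbTE s1).
Qed.

Lemma card_cover (S' : {set {set T}}) : S' \subset M ->
  (#|[set v | P v & [set v; pmate M v] \in S']| <= #|S'|)%N.
Proof.
move=> SM.
rewrite -(@card_in_imset _ _ (fun v => [set v; pmate M v])).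
  apply: subset_leq_card; apply/subsetP => E /imsetP [v]; rewrite inE => /andP [_ h] ->//.
move=> u v; rewrite !inE => /andP [Pu _] /andP [Pv _] E.
have : u \in [set v; pmate M v] by rewrite -E set21.
rewrite !inE => /orP [/eqP // | /eqP hu].
by move: Pu; rewrite hu (pmate_cross esymm ecross pmM) Pv.
Qed.

Lemma card_P : (#|[set v | P v]| <= #|PR| + #|S|)%N.
Proof.
case/andP: fS => SM _.
apply: (@leq_trans #|PR :|: [set v | P v & [set v; pmate M v] \in S]|).
  apply: subset_leq_card; apply/subsetP => v; rewrite !inE => Pv.
  by rewrite Pv /=; case: ([set v; _] \in S).
rewrite cardsU; apply: leq_trans (leq_subr _ _) _.
by rewrite leq_add2l card_cover.
Qed.

End Core.

Section Spec.
Variables (F : fieldType) (m n : nat) (adj : 'I_m -> 'I_n -> bool) (S : {set 'I_m}).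
Variables (B C : 'M[F]_(m, n)).
Hypothesis wB : weighted_biadj adj B.
Hypothesis wC : weighted_biadj adj C.
Hypothesis BC : B *m C^T = 1%:M.

Let e := cart_prod (delete_X adj S) K2.
Let V := {v : 'I_m + 'I_n | v \in ~: [set (inl x : 'I_m + 'I_n) | x in S]}.
Let T := (V * bool)%type.

Definition isl (a : 'I_m + 'I_n) : bool := if a is inl _ then true else false.
Definition Pp (w : T) : bool := if isl (val w.1) then ~~ w.2 else w.2.

Lemma e_sym : symmetric e.
Proof.
move=> [u b] [v c]; rewrite /e /cart_prod /delete_X /induced /K2 /=.
rewrite (eq_sym u) (eq_sym b) (eq_sym c).
by case: (val u) => x; case: (val v) => y.
Qed.

Lemma e_cross u v : e u v -> Pp u != Pp v.
Proof.
case: u v => [[a ha] b] [[c hc] d]; rewrite /e /cart_prod /delete_X /induced /K2 /Pp /=.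
case/orP => /andP [h1 h2].
  move: h1; rewrite -val_eqE /= => /eqP ->.
  by case: (isl c); case: b d h2 => [] [].
move: h1 => /eqP <-.
by case: a ha h2 => x ha; case: c hc => y hc //=; case: b.
Qed.

Definition wr (a : 'I_m + 'I_n) (b : bool) (c : 'I_m + 'I_n) (d : bool) : F :=
  match a, b, c, d with
  | inl x, false, inr y, false => B x y
  | inl x, false, inl x', true => (x == x')%:R
  | inr y, true, inr y', false => (y == y')%:R
  | inr y, true, inl x, true => C x y
  | _, _, _, _ => 0
  end.

Definition cr (a : 'I_m + 'I_n) (b : bool) (y : 'I_n) : F :=
  match a, b with
  | inl x, false => B x y
  | inr y0, true => (y0 == y)%:R
  | _, _ => 0
  end.

Lemma wr_fact a b c d : wr a b c d = \sum_y cr a b y * wr (inr y) true c d.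
Proof.
case: a b => [x|y0] [].
- by rewrite big1 // => y _; rewrite mul0r.
- case: c d => [x'|y'] [] /=.
  + have := congr1 (fun M : 'M[F]_m => M x x') BC; rewrite !mxE => <-.
    by apply: eq_bigr => y _; rewrite mxE.
  + by rewrite big1 // => y _; rewrite mulr0.
  + by rewrite big1 // => y _; rewrite mulr0.
  + rewrite (bigD1 y') //= eqxx mulr1 big1 ?addr0 // => y /negbTE ->.
    by rewrite mulr0.
- rewrite (bigD1 y0) //= eqxx mul1r big1 ?addr0 // => y.
  by rewrite eq_sym => /negbTE ->; rewrite mul0r.
- by rewrite big1 // => y _; rewrite mul0r.
Qed.

Definition wt (u v : T) : F := wr (val u.1) u.2 (val v.1) v.2.

Lemma wt_ok u v : Pp u -> (wt u v != 0) = e u v.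
Proof.
case: u v => [[a ha] b] [[c hc] d]; rewrite /wt /e /cart_prod /delete_X /induced /K2 /Pp /=.
rewrite -val_eqE /=.
case: a ha => [x|y] ha; case: c hc => [x'|y'] hc; case: b; case: d => //= _;
  rewrite ?andbF ?orbF ?andbT ?orbT ?eqxx ?wB ?wC //.
- by case: (x =P x') => [->|ne]; rewrite ?eqxx ?oner_eq0 //= ?eqxx; apply/esym/eqP => -[].
- by case: (y =P y') => [->|ne]; rewrite ?eqxx ?oner_eq0 //= ?eqxx; apply/esym/eqP => -[].
Qed.

Definition Xpart := [set w : T | isl (val w.1) && ~~ w.2].
Definition Ypart := [set w : T | ~~ isl (val w.1) && w.2].

Lemma card_Xpart : #|Xpart| = (m - #|S|)%N.
Proof.
rewrite -(@card_in_imset _ _ (fun w : T => val w.1)); last first.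
  move=> [[a ha] b] [[c hc] d]; rewrite !inE /= => /andP [_ hb] /andP [_ hd] eac.
  subst c; have -> : ha = hc by apply: bool_irrelevance.
  by move: hb hd; case: b; case: d.
have -> : [set val w.1 | w in Xpart] = [set inl x | x in ~: S].
  apply/setP => a; apply/imsetP/imsetP.
  - case => w; rewrite inE => /andP [hl _] ->.
    case: w hl => [[a' ha'] b] /=; case: a' ha' => // x hx _.
    exists x => //; rewrite inE; apply/negP => xS.
    by move: hx; rewrite in_setC => /negP; apply; apply: imset_f.
  - case => x; rewrite inE => xS ->.
    have hx : (inl x : 'I_m + 'I_n) \in ~: [set inl x | x in S].
      rewrite in_setC; apply/imsetP => -[x' x'S [ex]].
      by move: xS; rewrite ex x'S.
    by exists ((exist _ (inl x) hx : V), false); rewrite // inE.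
rewrite card_imset; last by move=> x y [].
by have := cardsC S; rewrite card_ord; lia.
Qed.

Lemma card_Ypart : #|Ypart| = n.
Proof.
rewrite -(@card_in_imset _ _ (fun w : T => val w.1)); last first.
  move=> [[a ha] b] [[c hc] d]; rewrite !inE /= => /andP [_ hb] /andP [_ hd] eac.
  subst c; have -> : ha = hc by apply: bool_irrelevance.
  by move: hb hd; case: b; case: d.
have -> : [set val w.1 | w in Ypart] = [set inr y | y in 'I_n].
  apply/setP => a; apply/imsetP/imsetP.
  - case => w; rewrite inE => /andP [hl _] ->.
    case: w hl => [[a' ha'] b] /=; case: a' ha' => // y hy _.
    by exists y.
  - case => y _ ->.
    have hy : (inr y : 'I_m + 'I_n) \in ~: [set inl x | x in S].
      by rewrite in_setC; apply/imsetP => -[x' x'S].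
    by exists ((exist _ (inr y) hy : V), true); rewrite // inE.
rewrite card_imset; last by move=> x y [].
by rewrite card_ord.
Qed.

Lemma card_Pset : #|[set w : T | Pp w]| = (m - #|S| + n)%N.
Proof.
have -> : [set w : T | Pp w] = Xpart :|: Ypart.
  by apply/setP => w; rewrite !inE /Pp; case: (isl _); case: w.2.
rewrite cardsU card_Xpart card_Ypart.
have -> : Xpart :&: Ypart = set0.
  by apply/setP => w; rewrite !inE; case: (isl _); case: w.2; rewrite ?andbF.
by rewrite cards0 subn0.
Qed.

Definition flip (w : T) : T := (w.1, ~~ w.2).
Lemma flipK : involutive flip.
Proof. by case=> v b; rewrite /flip /= negbK. Qed.
Lemma e_flip w : e w (flip w).
Proof. by rewrite /e /cart_prod /= eqxx /K2 /=; case: w.2. Qed.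

Definition M0 := pm_of flip.
Definition S0 := [set [set w; flip w] | w in Xpart].

Lemma S0_forcing : forcing_set e M0 S0.
Proof.
apply/andP; split.
  by apply/subsetP => E /imsetP [w _ ->]; apply: imset_f.
apply/forallP => M'; apply/implyP => /andP [pm' sub].
have pK := pmateK e_cross pm'.
have hx w : isl (val w.1) -> pmate M' w = flip w.
  move=> hl; case hb: w.2.
  - have w0X : flip w \in Xpart by rewrite inE /flip /= hl hb.
    have : [set flip w; flip (flip w)] \in M'.
      by apply: (subsetP sub); apply: imset_f.
    move/(pmate_uniq e_cross pm'); rewrite flipK => h.
    by rewrite {1}h pK.
  - have wX : w \in Xpart by rewrite inE hl hb.
    have : [set w; flip w] \in M' by apply: (subsetP sub); apply: imset_f.
    by move/(pmate_uniq e_cross pm') => <-.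
have hall w : pmate M' w = flip w.
  case hl: (isl (val w.1)); first exact: hx.
  have ewu := pmate_edge e_sym e_cross pm' w.
  case Hu: (pmate M' w) ewu => [v' b'] ewu.
  case hu: (isl (val v')).
    have := hx (v', b') hu; rewrite -Hu pK => wfu.
    by move: hl; rewrite wfu Hu /= hu.
  move: ewu; case: w hl Hu => [v b] hl Hu.
  rewrite /e /cart_prod /delete_X /induced /K2 /=.
  case/orP => /andP [h1 h2].
    by clear hl Hu; move/eqP: h1 => <-; rewrite /flip /=; move: h2; case: b; case: b'.
  move: hl hu h2 => /=; case: (val v) => [x|y]; case: (val v') => [x'|y'] //.
apply/eqP; rewrite (pm_eq e_cross pm') /M0 /pm_of.
by apply: eq_imset => w; rewrite hall.
Qed.

Lemma upper : (min_forcing_num e <= m - #|S|)%N.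
Proof.
apply: (@leq_trans (forcing_num e M0)).
  by apply: my_bigmin_le; exact: (pm_ofP flipK e_flip).
apply: (@leq_trans #|S0|); first by apply: my_bigmin_le; exact: S0_forcing.
by rewrite -card_Xpart; apply: leq_imset_card.
Qed.

Lemma PR_le (M S' : {set {set T}}) (pmM : perfect_matching e M)
  (fS : forcing_set e M S') : (#|PR Pp M S'| <= n)%N.
Proof.
have hdet := core_det e_sym e_cross pmM fS (w := wt) wt_ok.
set N := #|PR Pp M S'| in hdet *.
set A := (\matrix_(i, j) _ : 'M_N) in hdet.
pose Bc := \matrix_(i < N, y < n) cr (val (enum_val i).1) (enum_val i).2 y.
pose D := \matrix_(y < n, j < N)
  wr (inr y) true (val (pmate M (enum_val j)).1) (pmate M (enum_val j)).2.
have eA : A = Bc *m D.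
  apply/matrixP => i j; rewrite !mxE /wt wr_fact; apply: eq_bigr => y _.
  by rewrite !mxE.
have uA : A \in unitmx by rewrite unitmxE unitfE.
have := mxrank_unit uA; rewrite eA => <-.
exact: leq_trans (mxrankM_maxl _ _) (rank_leq_col _).
Qed.

Lemma lower : (m - #|S| <= min_forcing_num e)%N.
Proof.
apply: my_bigmin_ge.
  by rewrite -card_Xpart; apply: max_card.
move=> M pmM; apply: my_bigmin_ge.
  have := card_cover e_sym e_cross pmM (subxx M).
  have -> : [set v | Pp v & [set v; pmate M v] \in M] = [set v | Pp v].
    by apply/setP => v; rewrite !inE (pmateP e_cross pmM) andbT.
  by rewrite card_Pset; apply: leq_trans; apply: leq_addr.
move=> S' fS.
have := card_P e_sym e_cross pmM fS; rewrite card_Pset.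
move=> h2; have h1 := PR_le pmM fS; rewrite -(leq_add2r n); apply: leq_trans h2 _.
by rewrite [X in (_ <= X)%N]addnC leq_add2r.
Qed.

End Spec.

Close Scope ring_scope.

Theorem corollary3p3 (F : fieldType) (m n k : nat) (adj : 'I_m -> 'I_n -> bool)
  (S : {set 'I_m}) :
  (m <= n)%N ->
  (exists B : 'M[F]_(m, n), R_F adj B) ->
  #|S| = k ->
  min_forcing_num (cart_prod (delete_X adj S) K2) = (m - k)%N.
Proof.
move=> _ [B [wB [C [wC BC]]]] <-.
apply/eqP; rewrite eqn_leq.
by rewrite upper (@lower F m n adj S B C wB wC BC).
Qed.
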